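(* Let $f:\mathbb{R}^d\to\mathbb{R}$ be convex and $M$-Lipschitz with $X^*\neq\emptyset$. Run the Proximal Bundle Method with $\beta\in(0,1)$ and stepsizes $\rho_k=(f(x_k)-f^* )/D^2$, where $D^2>0$ is any number with $D^2\ge\sup\{\mathrm{dist}(x,X^* )^2: f(x)\le f(x_0)\}$. Then for any $0<\epsilon\le f(x_0)-f^*$, the number of descent steps taken before an $\epsilon$-minimizer is found is at most $$\left\lceil\frac{2\log\left(\frac{f(x_0)-f^*}{\epsilon}\right)}{\beta}\right\rceil,$$ and the number of null steps taken before then is at most $$\left(\frac{1}{1-(1-\beta/2)^2}\right)\frac{8M^2D^2}{(1-\beta)^2\epsilon^2}.$$
   Context: Throughout, $f:\mathbb{R}^d\to\mathbb{R}$ is a proper closed convex function attaining its minimum $f^*=\inf f$ on the nonempty set $X^*=\{x: f(x)=f^*\}$; $\mathrm{dist}(x,S)=\inf_{y\in S}\|x-y\|$; $\partial f(x)$ is the convex subdifferential. A subgradient oracle returns, for any $x$, the value $f(x)$ and some $g(x)\in\partial f(x)$. Proximal Bundle Method: fix $\beta\in(0,1)$, $x_0=z_0\in\mathbb{R}^d$, $g_0=g(x_0)$, and the initial model $f_0(x)=f(x_0)+\langle g_0,x-x_0\rangle$. At iteration $k\ge0$, given a convex model $f_k:\mathbb{R}^d\to\mathbb{R}$ and stepsize $\rho_k>0$, compute $z_{k+1}=\operatorname{argmin}_z f_k(z)+\frac{\rho_k}{2}\|z-x_k\|^2$. If $\beta(f(x_k)-f_k(z_{k+1}))\le f(x_k)-f(z_{k+1})$,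 iteration $k$ is a descent step and $x_{k+1}=z_{k+1}$; otherwise it is a null step and $x_{k+1}=x_k$. Then a new convex model $f_{k+1}$ and stepsize $\rho_{k+1}$ are chosen satisfying, with $g_{k+1}=g(z_{k+1})$ and $s_{k+1}=\rho_k(x_k-z_{k+1})$: (1) $f_{k+1}(x)\le f(x)$ for all $x$; (2) $f_{k+1}(x)\ge f(z_{k+1})+\langle g_{k+1},x-z_{k+1}\rangle$ for all $x$; (3) if iteration $k$ was a null step, $f_{k+1}(x)\ge f_k(z_{k+1})+\langle s_{k+1},x-z_{k+1}\rangle$ for all $x$; (4) if iteration $k$ was a null step, $\rho_{k+1}\ge\rho_k$. An $\epsilon$-minimizer is a point $x$ with $f(x)-f^*\le\epsilon$. *)

(* Defs.v *)
From HB Require Import structures.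
From mathcomp Require Import all_boot all_order all_algebra.
From mathcomp Require Import all_classical all_reals.
From mathcomp Require Import exp.
Set Implicit Arguments. Unset Strict Implicit. Unset Printing Implicit Defensive.
Import Order.TTheory GRing.Theory Num.Theory.
Local Open Scope ring_scope.
Local Open Scope classical_set_scope.

Section Defs.
Variables (R : realType) (d : nat).
Local Notation V := 'rV[R]_d.

Definition dotp (u v : V) : R := \sum_(i < d) u 0 i * v 0 i.
Definition enorm (u : V) : R := Num.sqrt (dotp u u).

Definition convex_fun (f : V -> R) : Prop :=
  forall (x y : V) (t : R), 0 <= t -> t <= 1 ->
    f (t *: x + (1 - t) *: y) <= t * f x + (1 - t) * f y.

Definition lipschitz_fun (M : R) (f : V -> R) : Prop :=
  forall x y : V, `|f x - f y| <= M * enorm (x - y).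

Definition is_subgrad (f : V -> R) (x g : V) : Prop :=
  forall y : V, f x + dotp g (y - x) <= f y.

Definition argminset (f : V -> R) : set V :=
  [set x | forall y, f x <= f y].
Definition dist (x : V) (S : set V) : R :=
  inf [set r | exists2 y, S y & r = enorm (x - y)].

Definition is_min_value (f : V -> R) (fstar : R) : Prop :=
  (forall y, fstar <= f y) /\ (exists xs, f xs = fstar).

Definition descent_test (beta : R) (f : V -> R) (xk zk1 : V) (fk : V -> R) : bool :=
  beta * (f xk - fk zk1) <= f xk - f zk1.

(* A run of the Proximal Bundle Method with subgradient oracle g,
   iterates x, proximal points z, models fm, stepsizes rho.
   The iteration rules are required only while x_k is not optimal
   (i.e. while rho_k > 0 and the method is well defined). *)
Definition pbm_run (f : V -> R) (g : V -> V) (fstar beta : R)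
  (x z : nat -> V) (fm : nat -> V -> R) (rho : nat -> R) : Prop :=
  [/\ x 0%N = z 0%N,
      (forall y, fm 0%N y = f (x 0%N) + dotp (g (x 0%N)) (y - x 0%N)),
      (forall k, convex_fun (fm k)) &
      (forall k, fstar < f (x k) ->
            (forall y, fm k (z k.+1) + rho k / 2 * enorm (z k.+1 - x k) ^+ 2
                       <= fm k y + rho k / 2 * enorm (y - x k) ^+ 2) /\
            (if descent_test beta f (x k) (z k.+1) (fm k)
             then x k.+1 = z k.+1 else x k.+1 = x k) /\
            (forall y, fm k.+1 y <= f y) /\
            (forall y, f (z k.+1) + dotp (g (z k.+1)) (y - z k.+1) <= fm k.+1 y) /\
            (* (3) aggregation on null steps, s_{k+1} = rho_k (x_k - z_{k+1}) *)
            (~~ descent_test beta f (x k) (z k.+1) (fm k) ->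
               forall y, fm k (z k.+1) + dotp (rho k *: (x k - z k.+1)) (y - z k.+1)
                         <= fm k.+1 y) /\
            (~~ descent_test beta f (x k) (z k.+1) (fm k) -> rho k <= rho k.+1))].

Definition n_descent (beta : R) (f : V -> R) (x z : nat -> V) (fm : nat -> V -> R)
  (N : nat) : nat :=
  count (fun k => descent_test beta f (x k) (z k.+1) (fm k)) (iota 0 N).
Definition n_null (beta : R) (f : V -> R) (x z : nat -> V) (fm : nat -> V -> R)
  (N : nat) : nat :=
  count (fun k => ~~ descent_test beta f (x k) (z k.+1) (fm k)) (iota 0 N).

End Defs.

(* Main.v *)
Require Import Defs.
From HB Require Import structures.
From mathcomp Require Import all_boot all_order all_algebra.
From mathcomp Require Import all_classical all_reals.
From mathcomp Require Import exp.
From mathcomp Require Import ring lra.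
Import Order.TTheory GRing.Theory Num.Theory.
Local Open Scope ring_scope.
Local Open Scope classical_set_scope.

Lemma dotpC {R : realType} {d : nat} (u v : 'rV[R]_d) : dotp u v = dotp v u.
Proof. by rewrite /dotp; apply: eq_bigr => i _; rewrite mulrC. Qed.

Lemma dotpDl {R : realType} {d : nat} (u v w : 'rV[R]_d) :
  dotp (u + v) w = dotp u w + dotp v w.
Proof. by rewrite /dotp -big_split; apply: eq_bigr => i _; rewrite !mxE mulrDl. Qed.

Lemma dotpZl {R : realType} {d : nat} (a : R) (u w : 'rV[R]_d) :
  dotp (a *: u) w = a * dotp u w.
Proof. by rewrite /dotp mulr_sumr; apply: eq_bigr => i _; rewrite !mxE mulrA. Qed.

Lemma dotpNl {R : realType} {d : nat} (u w : 'rV[R]_d) :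
  dotp (- u) w = - dotp u w.
Proof. by rewrite -scaleN1r dotpZl mulN1r. Qed.

Lemma dotpBl {R : realType} {d : nat} (u v w : 'rV[R]_d) :
  dotp (u - v) w = dotp u w - dotp v w.
Proof. by rewrite dotpDl dotpNl. Qed.

Lemma dotpDr {R : realType} {d : nat} (u v w : 'rV[R]_d) :
  dotp w (u + v) = dotp w u + dotp w v.
Proof. by rewrite !(dotpC w) dotpDl. Qed.

Lemma dotpZr {R : realType} {d : nat} (a : R) (u w : 'rV[R]_d) :
  dotp w (a *: u) = a * dotp w u.
Proof. by rewrite !(dotpC w) dotpZl. Qed.

Lemma dotpBr {R : realType} {d : nat} (u v w : 'rV[R]_d) :
  dotp w (u - v) = dotp w u - dotp w v.
Proof. by rewrite !(dotpC w) dotpBl. Qed.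

Lemma dotp_ge0 {R : realType} {d : nat} (u : 'rV[R]_d) : 0 <= dotp u u.
Proof. by rewrite /dotp; apply: sumr_ge0 => i _; rewrite -expr2 sqr_ge0. Qed.

Lemma enorm_sq {R : realType} {d : nat} (u : 'rV[R]_d) : enorm u ^+ 2 = dotp u u.
Proof. by rewrite /enorm sqr_sqrtr // dotp_ge0. Qed.

Lemma enorm_ge0 {R : realType} {d : nat} (u : 'rV[R]_d) : 0 <= enorm u.
Proof. by rewrite /enorm sqrtr_ge0. Qed.

Lemma enormN {R : realType} {d : nat} (u : 'rV[R]_d) : enorm (- u) = enorm u.
Proof. by rewrite /enorm dotpNl dotpC dotpNl opprK. Qed.

Lemma subgrad_bound {R : realType} {d : nat} (f : 'rV[R]_d -> R) (M : R) (y g : 'rV[R]_d) :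
  lipschitz_fun M f -> is_subgrad f y g -> dotp g g <= M ^+ 2.
Proof.
move=> hL hS.
have h1 := hS (y + g). rewrite addrAC subrr add0r in h1.
have h2 := hL (y + g) y. rewrite addrAC subrr add0r in h2.
have h3 : dotp g g <= M * enorm g.
  have := ler_norm (f (y + g) - f y). lra.
rewrite -enorm_sq in h3 *.
have := enorm_ge0 g; nra.
Qed.

Lemma dotp0l {R : realType} {d : nat} (w : 'rV[R]_d) : dotp 0 w = 0.
Proof. by rewrite -(scale0r (0 : 'rV[R]_d)) dotpZl mul0r. Qed.


Lemma sqexp {R : realType} {d : nat} (a b : 'rV[R]_d) :
  dotp (a + b) (a + b) = dotp a a + 2 * dotp a b + dotp b b.
Proof. rewrite dotpDl !dotpDr (dotpC b a); ring. Qed.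

Lemma start_bound {R : realType} {d : nat} (f fk : 'rV[R]_d -> R) (x z g : 'rV[R]_d)
  (M rho : R) :
  (forall y, f x + dotp g (y - x) <= fk y) -> dotp g g <= M ^+ 2 -> 0 < rho ->
  (f x - (fk z + rho / 2 * enorm (z - x) ^+ 2)) * rho <= M ^+ 2 / 2.
Proof.
move=> hc hg hr.
have h1 := hc z.
have h2 := dotp_ge0 (rho *: (z - x) + g).
rewrite sqexp !dotpZl !dotpZr (dotpC (z - x) g) in h2.
rewrite enorm_sq.
move: h1 h2 hg; set W := dotp (z - x) (z - x); set Q := dotp g (z - x).
move=> h1 h2 hg.
have : (f x - (fk z + rho / 2 * W)) <= - Q - rho / 2 * W by lra.
move=> h3.
have h4 : (- Q - rho / 2 * W) * rho <= M ^+ 2 / 2 by nra.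
by apply: le_trans h4; rewrite ler_pM2r.
Qed.

Lemma null_core {R : realType} {d : nat} (f fk fk1 : 'rV[R]_d -> R) (x z y g : 'rV[R]_d)
  (M rho lam beta : R) :
  0 < rho -> 0 <= lam -> lam <= 1 -> lam <= (1 - beta) / 2 ->
  fk z + dotp (rho *: (x - z)) (y - z) <= fk1 y ->
  f z + dotp g (y - z) <= fk1 y ->
  dotp g g <= M ^+ 2 ->
  ~~ (beta * (f x - fk z) <= f x - f z) ->
  let v := fk z + rho / 2 * enorm (z - x) ^+ 2 in
  v + lam * (1 - beta) * (f x - v) - lam ^+ 2 * M ^+ 2 / rho
    <= fk1 y + rho / 2 * enorm (y - x) ^+ 2.
Proof.
move=> hr hl0 hl1 hlb hA hB hg hn.
have hnull : f x - f z < beta * (f x - fk z) by rewrite ltNge.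
cbv zeta; rewrite !enorm_sq.
have -> : y - x = (y - z) + (z - x) by rewrite addrA subrK.
have hxz : x - z = - (z - x) by rewrite opprB.
rewrite hxz scalerN dotpNl dotpZl in hA.
set w := y - z in hA hB *; set u := z - x in hA *.
clearbody w u.
rewrite sqexp.
have S1 := dotp_ge0 (rho *: w + lam *: (g + rho *: u)).
rewrite sqexp !dotpZl !dotpZr !dotpDl !dotpDr !dotpZl !dotpZr in S1.
have S2 := dotp_ge0 (g - rho *: u).
rewrite dotpBl !dotpBr !dotpZl !dotpZr in S2.
rewrite ?(dotpC u g) ?(dotpC u w) ?(dotpC w g) in S1 S2 hA hB *.
move: S1 S2 hA hB hg.
set W := dotp w w; set U := dotp u u; set P := dotp w u; set Q := dotp g w.
set K := dotp g u; set GG := dotp g g.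
move=> S1 S2 hA hB hg.
have hconv : (1 - lam) * (fk z - rho * P) + lam * (f z + Q) <= fk1 y.
  have : (1 - lam) * (fk z - rho * P) <= (1 - lam) * fk1 y by rewrite ler_wpM2l //; lra.
  have : lam * (f z + Q) <= lam * fk1 y by rewrite ler_wpM2l.
  lra.
set N := GG + 2 * rho * K + rho ^+ 2 * U.
have hS1 : 0 <= rho ^+ 2 * W + 2 * rho * lam * (Q + rho * P) + lam ^+ 2 * N.
  rewrite /N; move: S1; rewrite -!mulrA; lra.
have hN : N <= 2 * M ^+ 2 + 2 * rho ^+ 2 * U.
  rewrite /N; move: S2; rewrite -!mulrA; lra.
have hkey : rho / 2 * W + lam * (Q + rho * P) >= - (lam ^+ 2 * (M ^+ 2 + rho ^+ 2 * U)) / rho.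
  rewrite -subr_ge0.
  have -> : rho / 2 * W + lam * (Q + rho * P) - - (lam ^+ 2 * (M ^+ 2 + rho ^+ 2 * U)) / rho
     = (rho ^+ 2 * W + 2 * rho * lam * (Q + rho * P) + lam ^+ 2 * (2 * M ^+ 2 + 2 * rho ^+ 2 * U)) / (2 * rho).
    by field; rewrite gt_eqF.
  apply: divr_ge0; last lra.
  have : lam ^+ 2 * N <= lam ^+ 2 * (2 * M ^+ 2 + 2 * rho ^+ 2 * U) by rewrite ler_wpM2l // sqr_ge0.
  lra.
have hU : 0 <= U by apply: dotp_ge0.
have hnull' : (1 - beta) * (f x - fk z) <= f z - fk z by lra.
have hmid : lam * (1 - beta) * (f x - (fk z + rho / 2 * U)) + lam * rho / 2 * U * (1 - beta)
   <= lam * (f z - fk z).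
  have : lam * ((1 - beta) * (f x - fk z)) <= lam * (f z - fk z) by rewrite ler_wpM2l.
  lra.
have hextra : lam ^+ 2 * rho * U <= lam * rho / 2 * U * (1 - beta).
  have : 0 <= lam * rho * U * ((1 - beta) / 2 - lam).
    apply: mulr_ge0; last lra.
    by apply: mulr_ge0 => //; apply: mulr_ge0 => //; lra.
  move=> h; rewrite -subr_ge0; move: h; rewrite -subr_ge0 => h.
  have -> : lam * rho / 2 * U * (1 - beta) - lam ^+ 2 * rho * U = lam * rho * U * ((1 - beta) / 2 - lam) by ring.
  by move: h; rewrite subr0.
have hsplit : lam ^+ 2 * (M ^+ 2 + rho ^+ 2 * U) / rho = lam ^+ 2 * M ^+ 2 / rho + lam ^+ 2 * rho * U.
  by field; rewrite gt_eqF.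
lra.
Qed.


Lemma gap_lb {R : realType} {d : nat} (f fk : 'rV[R]_d -> R) (fstar : R) (x : 'rV[R]_d)
  (v rho D2 : R) :
  is_min_value f fstar -> (forall y, fk y <= f y) ->
  (forall y, v <= fk y + rho / 2 * enorm (y - x) ^+ 2) ->
  0 < rho -> rho = (f x - fstar) / D2 -> 0 < D2 ->
  dist x (argminset f) ^+ 2 <= D2 -> v <= fstar + (f x - fstar) / 2.
Proof.
move=> [hfs [xs hxs]] hk hv hr hrho hD hdist.
have hD0 : 0 <= f x - fstar by have := hfs x; lra.
have hS : forall r, (fun r => exists2 y, argminset f y & r = enorm (x - y)) r ->
    v - fstar <= rho / 2 * r ^+ 2 /\ 0 <= r.
  move=> r [y hy ->]; split; last exact: enorm_ge0.
  have hfy : f y = fstar by have := hy xs; have := hfs y; lra.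
  have := hv y; have := hk y.
  by rewrite -enormN opprB; lra.
have [hle|hgt] := lerP v fstar; first lra.
pose a := Num.sqrt (2 * (v - fstar) / rho).
have ha : a <= dist x (argminset f).
  apply: lb_le_inf.
    exists (enorm (x - xs)); exists xs => //.
    by move=> y; rewrite hxs; apply: hfs.
  move=> r hr'; have [h1 h2] := hS r hr'.
  rewrite /a -(ger0_norm h2) -sqrtr_sqr ler_sqrt; last exact: sqr_ge0.
  rewrite ler_pdivrMr //; lra.
have ha0 : 0 <= a by rewrite sqrtr_ge0.
have : a ^+ 2 <= D2 by apply: le_trans hdist; rewrite ler_sqr //; [exact: (le_trans ha0 ha)].
rewrite sqr_sqrtr; last by apply: divr_ge0 => //; [lra | exact: ltW].
rewrite ler_pdivrMr // => h.
have : rho * D2 = f x - fstar by rewrite hrho divfK //; lra.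
nra.
Qed.


Theorem theorem5 (R : realType) (d : nat) (f : 'rV[R]_d -> R) (M : R)
  (g : 'rV[R]_d -> 'rV[R]_d) (fstar beta D2 eps : R)
  (x z : nat -> 'rV[R]_d) (fm : nat -> 'rV[R]_d -> R) (rho : nat -> R) :
  convex_fun f -> lipschitz_fun M f ->
  is_min_value f fstar ->
  (forall y, is_subgrad f y (g y)) ->
  0 < beta -> beta < 1 ->
  0 < D2 ->
  (forall y, f y <= f (x 0%N) -> dist y (argminset f) ^+ 2 <= D2) ->
  (forall k, rho k = (f (x k) - fstar) / D2) ->
  pbm_run f g fstar beta x z fm rho ->
  0 < eps -> eps <= f (x 0%N) - fstar ->
  forall N : nat, (forall k, (k < N)%N -> eps < f (x k) - fstar) ->
    ((n_descent beta f x z fm N)%:R : R)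
      <= (Num.ceil (2 * ln ((f (x 0%N) - fstar) / eps) / beta))%:~R /\
    ((n_null beta f x z fm N)%:R : R)
      <= (1 / (1 - (1 - beta / 2) ^+ 2)) * (8 * M ^+ 2 * D2 / ((1 - beta) ^+ 2 * eps ^+ 2)).
Proof.
move=> hconv hlip hmin hsub hb0 hb1 hD hlev hrho hrun he0 heD N hN.
case: hrun => hx0 hfm0 hconvm hstep.
have [hfs [xs hxs]] := hmin.
have hgb : forall y, dotp (g y) (g y) <= M ^+ 2 by move=> y; exact: subgrad_bound hlip (hsub y).
have hM : 0 < M.
  have := hlip (x 0%N) xs; rewrite hxs.
  have := enorm_ge0 (x 0%N - xs).
  have := ler_norm (f (x 0%N) - fstar).
  nra.
have hgov : forall k, (k < N)%N -> fstar < f (x k).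
  by move=> k /hN; lra.
have hrhop : forall k, (k < N)%N -> 0 < rho k.
  by move=> k /hN hk; rewrite hrho; apply: divr_gt0 => //; lra.
have hlow : forall k, (k < N)%N -> forall y, fm k y <= f y.
  case=> [|k] hk y.
    by rewrite hfm0; exact: (hsub (x 0%N) y).
  have [_ [_ [h1 _]]] := hstep k (hgov k (ltnW hk)).
  exact: h1.
have hen0 : forall u : 'rV[R]_d, enorm (u - u) ^+ 2 = 0.
  by move=> u; rewrite enorm_sq subrr dotp0l.
have hmono : forall k, (k < N)%N -> f (x k.+1) <= f (x k).
  move=> k hk.
  have [hm [hd _]] := hstep k (hgov k hk).
  have h1 := hm (x k); rewrite hen0 mulr0 addr0 in h1.
  have h2 := hlow k hk (x k).
  have h3 : 0 <= rho k / 2 * enorm (z k.+1 - x k) ^+ 2.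
    by apply: mulr_ge0; [apply: divr_ge0; [exact: ltW (hrhop k hk)|] | exact: sqr_ge0].
  move: hd; case: ifP => hdt ->; last by [].
  move: hdt; rewrite /descent_test => hdt.
  have : 0 <= f (x k) - fm k (z k.+1) by lra.
  nra.
have hlevel : forall k, (k < N)%N -> f (x k) <= f (x 0%N).
  elim=> [|k IH] hk; first by [].
  exact: le_trans (hmono k (ltnW hk)) (IH (ltnW hk)).
pose v k := fm k (z k.+1) + rho k / 2 * enorm (z k.+1 - x k) ^+ 2.
pose G k := f (x k) - v k.
have hG : forall k, (k < N)%N -> (f (x k) - fstar) / 2 <= G k.
  move=> k hk.
  have [hm _] := hstep k (hgov k hk).
  have := @gap_lb _ _ f (fm k) fstar (x k) _ (rho k) D2 hmin (hlow k hk) hm (hrhop k hk) (hrho k) hD (hlev _ (hlevel k hk)).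
  rewrite /G /v; lra.

have hvq : forall k, (k < N)%N -> fm k (z k.+1) <= v k.
  move=> k hk; rewrite /v -{1}(addr0 (fm k (z k.+1))) lerD2l.
  by apply: mulr_ge0; [apply: divr_ge0; [exact: ltW (hrhop k hk)|] | exact: sqr_ge0].
have hdesc : forall k, (k < N)%N -> descent_test beta f (x k) (z k.+1) (fm k) ->
    x k.+1 = z k.+1 /\ f (x k.+1) - fstar <= (1 - beta / 2) * (f (x k) - fstar).
  move=> k hk hdt.
  have [_ [hd _]] := hstep k (hgov k hk).
  rewrite hdt in hd; split => //; rewrite hd.
  have h1 := hG k hk; have h2 := hvq k hk.
  move: hdt; rewrite /descent_test => hdt.
  have h3 : beta * ((f (x k) - fstar) / 2) <= beta * (f (x k) - fm k (z k.+1)).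
    by rewrite ler_wpM2l //; [exact: ltW | rewrite /G in h1; lra].
  lra.
have hstart : forall k, (k < N)%N ->
    (forall y, f (x k) + dotp (g (x k)) (y - x k) <= fm k y) -> G k * rho k <= M ^+ 2 / 2.
  by move=> k hk hc; exact: (@start_bound _ _ f (fm k) (x k) (z k.+1) (g (x k)) M (rho k) hc (hgb _) (hrhop k hk)).
pose c k := (1 - beta) ^+ 2 * rho k / (4 * M ^+ 2).
have hGpos : forall k, (k < N)%N -> 0 < G k.
  by move=> k hk; have := hG k hk; have := hgov k hk; lra.
have hnullrec : forall k, (k.+1 < N)%N -> ~~ descent_test beta f (x k) (z k.+1) (fm k) ->
    G k * rho k <= M ^+ 2 / 2 ->
    [/\ x k.+1 = x k, rho k.+1 = rho k & G k.+1 <= G k - c k * G k ^+ 2].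
  move=> k hk1 hn hGr.
  have hk : (k < N)%N := ltnW hk1.
  have [hm [hd [hl [hB [hA hr]]]]] := hstep k (hgov k hk).
  rewrite (negbTE hn) in hd.
  have hrr : rho k.+1 = rho k by rewrite !hrho hd.
  split => //.
  pose lam := (1 - beta) * G k * rho k / (2 * M ^+ 2).
  have hM2 : 0 < 2 * M ^+ 2 by apply: mulr_gt0 => //; exact: exprn_gt0.
  have hl0 : 0 <= lam.
    apply: divr_ge0; last exact: ltW.
    apply: mulr_ge0; last exact: ltW (hrhop k hk).
    by apply: mulr_ge0; [lra | exact: ltW (hGpos k hk)].
  have hlb : lam <= (1 - beta) / 2.
    rewrite /lam ler_pdivrMr //.
    have : (1 - beta) * (G k * rho k) <= (1 - beta) * (M ^+ 2 / 2) by rewrite ler_wpM2l //; lra.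
    have : 0 <= (1 - beta) * M ^+ 2 by apply: mulr_ge0; [lra | exact: sqr_ge0].
    rewrite !mulrA; lra.
  have hl1 : lam <= 1 by lra.
  have core := @null_core _ _ f (fm k) (fm k.+1) (x k) (z k.+1) (z k.+2) (g (z k.+1)) M (rho k)
     lam beta (hrhop k hk) hl0 hl1 hlb (hA hn (z k.+2)) (hB (z k.+2)) (hgb _) hn.
  cbv zeta in core.
  have hid : lam * (1 - beta) * G k - lam ^+ 2 * M ^+ 2 / rho k = c k * G k ^+ 2.
    rewrite /lam /c; field.
    by rewrite !gt_eqF // (hrhop k hk).
  rewrite /G /v /= hrr hd.
  rewrite /G /v /= in hid.
  lra.

pose P k := 1 / (c k * G k).
pose A := 8 * M ^+ 2 * D2 / (1 - beta) ^+ 2.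
have hb1' : 0 < 1 - beta by lra.
have hcpos : forall k, (k < N)%N -> 0 < c k.
  move=> k hk; apply: divr_gt0; last by apply: mulr_gt0 => //; exact: exprn_gt0.
  by apply: mulr_gt0; [exact: exprn_gt0 | exact: hrhop].
have hDpos : forall k, (k < N)%N -> 0 < f (x k) - fstar.
  by move=> k hk; have := hgov k hk; lra.
have hPub : forall k, (k < N)%N -> P k <= A / (f (x k) - fstar) ^+ 2.
  move=> k hk.
  have hcG : 0 < c k * G k by apply: mulr_gt0; [exact: hcpos | exact: hGpos].
  rewrite /P ler_pdivrMr //.
  have -> : A / (f (x k) - fstar) ^+ 2 * (c k * G k) = 2 * G k / (f (x k) - fstar).
    rewrite /A /c hrho; field.
    by rewrite !gt_eqF // ?hDpos ?hb1'.
  by rewrite ler_pdivlMr ?hDpos //; have := hG k hk; lra.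
have hPge1 : forall k, (k < N)%N -> G k * rho k <= M ^+ 2 / 2 -> 1 <= P k.
  move=> k hk hGr.
  have hcG : 0 < c k * G k by apply: mulr_gt0; [exact: hcpos | exact: hGpos].
  rewrite /P ler_pdivlMr // mul1r.
  have -> : c k * G k = (1 - beta) ^+ 2 * (G k * rho k) / (4 * M ^+ 2).
    by rewrite /c; field; rewrite gt_eqF.
  rewrite ler_pdivrMr; last by apply: mulr_gt0 => //; exact: exprn_gt0.
  have h0 : 0 <= G k * rho k by apply: mulr_ge0; [exact: ltW (hGpos k hk) | exact: ltW (hrhop k hk)].
  have h1 : (1 - beta) ^+ 2 <= 1 by rewrite expr2; nra.
  have h2 : 0 <= (1 - beta) ^+ 2 by exact: sqr_ge0.
  have : (1 - beta) ^+ 2 * (G k * rho k) <= 1 * (M ^+ 2 / 2).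
    by apply: ler_pM.
  have : 0 <= M ^+ 2 by exact: sqr_ge0.
  lra.
have hPnull : forall k, (k.+1 < N)%N -> ~~ descent_test beta f (x k) (z k.+1) (fm k) ->
    G k * rho k <= M ^+ 2 / 2 ->
    [/\ x k.+1 = x k, P k + 1 <= P k.+1 & G k.+1 * rho k.+1 <= M ^+ 2 / 2].
  move=> k hk1 hn hGr.
  have hk : (k < N)%N := ltnW hk1.
  have [hx hr hrec] := hnullrec k hk1 hn hGr.
  have hcc : c k.+1 = c k by rewrite /c hr.
  have hcG : 0 < c k * G k by apply: mulr_gt0; [exact: hcpos | exact: hGpos].
  have hG1 : 0 < G k.+1 := hGpos _ hk1.
  have hc : 0 < c k := hcpos k hk.
  have hGle : G k.+1 <= G k.
    have : 0 <= c k * G k ^+ 2 by apply: mulr_ge0; [exact: ltW | exact: sqr_ge0].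
    lra.
  split => //; last first.
    rewrite hr; apply: le_trans hGr; rewrite ler_pM2r //; exact: hrhop.
  rewrite /P hcc.
  rewrite ler_pdivlMr; last exact: mulr_gt0.
  set t := c k * G k.
  have h1 : (1 / t + 1) * (c k * G k.+1) <= (1 / t + 1) * (c k * (G k - c k * G k ^+ 2)).
    apply: ler_wpM2l; first by apply: addr_ge0 => //; apply: divr_ge0 => //; exact: ltW.
    by apply: ler_wpM2l => //; exact: ltW.
  have e : (1 / t + 1) * (c k * (G k - c k * G k ^+ 2)) = (1 + t) * (1 - t).
    by rewrite /t; field; rewrite !gt_eqF // hGpos.
  rewrite e in h1.
  have : 0 <= t ^+ 2 by exact: sqr_ge0.
  move: h1; rewrite /t; nra.

pose q := 1 - beta / 2.
have hq0 : 0 < q by rewrite /q; lra.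
have hq1 : q < 1 by rewrite /q; lra.
have h1q : 0 < 1 - q ^+ 2 by rewrite expr2; nra.
pose a := q ^+ 2 / (1 - q ^+ 2).
have ha0 : 0 <= a by apply: divr_ge0; [exact: sqr_ge0 | exact: ltW].
have hA0 : 0 <= A.
  rewrite /A; apply: divr_ge0; last exact: sqr_ge0.
  by apply: mulr_ge0; [apply: mulr_ge0; [lra | exact: sqr_ge0] | exact: ltW].
have ndS : forall k, n_descent beta f x z fm k.+1 =
    (n_descent beta f x z fm k + descent_test beta f (x k) (z k.+1) (fm k))%N.
  move=> k; have e : iota 0 k.+1 = iota 0 k ++ [:: k] by rewrite -addn1 iotaD.
  by rewrite /n_descent e count_cat /= addn0.
have nnS : forall k, n_null beta f x z fm k.+1 =
    (n_null beta f x z fm k + ~~ descent_test beta f (x k) (z k.+1) (fm k))%N.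
  move=> k; have e : iota 0 k.+1 = iota 0 k ++ [:: k] by rewrite -addn1 iotaD.
  by rewrite /n_null e count_cat /= addn0.
have Inv : forall k, (k < N)%N ->
   [/\ f (x k) - fstar <= q ^+ (n_descent beta f x z fm k) * (f (x 0%N) - fstar),
       G k * rho k <= M ^+ 2 / 2 &
       ((n_null beta f x z fm k)%:R : R) <= A / (f (x k) - fstar) ^+ 2 * a + P k - 1].
  elim=> [|k IH] hk.
    have hG0 : G 0%N * rho 0%N <= M ^+ 2 / 2.
      by apply: hstart => // y; rewrite hfm0.
    split => //.
      by rewrite /n_descent /= expr0 mul1r.
    rewrite /n_null /=.
    have := hPge1 _ hk hG0.
    have : 0 <= A / (f (x 0%N) - fstar) ^+ 2 * a.
      by apply: mulr_ge0 => //; apply: divr_ge0 => //; exact: sqr_ge0.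
    lra.
  have hk0 : (k < N)%N := ltnW hk.
  have [I1 I2 I3] := IH hk0.
  case hdt : (descent_test beta f (x k) (z k.+1) (fm k)).
  - have [hxz hdec] := hdesc k hk0 hdt.
    have [_ [_ [_ [hB _]]]] := hstep k (hgov k hk0).
    have hcut : forall y, f (x k.+1) + dotp (g (x k.+1)) (y - x k.+1) <= fm k.+1 y.
      by move=> y; rewrite hxz; exact: hB y.
    split.
    + rewrite ndS hdt addn1 exprS -mulrA.
      apply: le_trans hdec _; apply: ler_wpM2l; first exact: ltW.
      exact: I1.
    + exact: hstart.
    + rewrite nnS hdt addn0.
      apply: le_trans I3 _.
      have hPk := hPub k hk0.
      have hP1 := hPge1 _ hk (hstart _ hk hcut).
      set D0 := f (x k) - fstar in hPk hdec *.
      set D1 := f (x k.+1) - fstar in hdec *.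
      have hD0 : 0 < D0 := hDpos k hk0.
      have hD1 : 0 < D1 := hDpos _ hk.
      have hsq : D1 ^+ 2 <= q ^+ 2 * D0 ^+ 2.
        rewrite -exprMn; rewrite ler_sqr //; [exact: ltW | apply: mulr_ge0; exact: ltW].
      have hinv : 1 / D0 ^+ 2 <= q ^+ 2 / D1 ^+ 2.
        rewrite ler_pdivrMr ?exprn_gt0 // mulrAC ler_pdivlMr ?exprn_gt0 // mul1r.
        exact: hsq.
      have hX : A / D0 ^+ 2 <= A / D1 ^+ 2 * q ^+ 2.
        have := ler_wpM2l hA0 hinv; lra.
      have e1 : A / D0 ^+ 2 * a + A / D0 ^+ 2 = A / D0 ^+ 2 / (1 - q ^+ 2).
        by rewrite /a; field; rewrite !gt_eqF // ?exprn_gt0.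
      have e2 : A / D1 ^+ 2 * a = A / D1 ^+ 2 * q ^+ 2 / (1 - q ^+ 2).
        by rewrite /a mulrA.
      have : A / D0 ^+ 2 / (1 - q ^+ 2) <= A / D1 ^+ 2 * q ^+ 2 / (1 - q ^+ 2).
        by rewrite ler_pM2r // invr_gt0.
      lra.
  - have hn : ~~ descent_test beta f (x k) (z k.+1) (fm k) by rewrite hdt.
    have [hx hP hGr] := hPnull k hk hn I2.
    split => //.
    + by rewrite ndS hdt addn0 hx.
    + rewrite nnS hdt addn1 hx -natr1 /=.
      move: I3 hP; lra.

have hD00 : 0 < f (x 0%N) - fstar by lra.
case: (posnP N) => [HN0 | HNpos].
  rewrite HN0 /n_descent /n_null /=; split.
    rewrite ler0z ceil_ge0.
    have : 0 <= 2 * ln ((f (x 0%N) - fstar) / eps) / beta.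
      apply: divr_ge0; last exact: ltW.
      apply: mulr_ge0 => //; apply: ln_ge0.
      by rewrite ler_pdivlMr // mul1r.
    lra.
  apply: mulr_ge0; first by apply: divr_ge0 => //; exact: ltW.
  apply: divr_ge0; first by apply: mulr_ge0 => //; [apply: mulr_ge0 => //; exact: sqr_ge0 | exact: ltW].
  by apply: mulr_ge0; exact: sqr_ge0.
pose K := N.-1.
have hK : (K < N)%N by rewrite /K prednK.
have hNK : N = K.+1 by rewrite /K prednK.
have [I1 I2 I3] := Inv K hK.
have hepsK := hN K hK.
rewrite hNK ndS nnS.
split.
- set m := n_descent beta f x z fm K in I1 *.
  set L := ln ((f (x 0%N) - fstar) / eps).
  have hqm : eps / (f (x 0%N) - fstar) < q ^+ m.
    by rewrite ltr_pdivrMr //; lra.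
  have hqm0 : 0 < q ^+ m by exact: exprn_gt0.
  have hln : ln (eps / (f (x 0%N) - fstar)) < ln (q ^+ m).
    by rewrite ltr_ln // posrE divr_gt0.
  rewrite lnXn // -mulr_natr in hln.
  have e : eps / (f (x 0%N) - fstar) = ((f (x 0%N) - fstar) / eps)^-1 by rewrite invf_div.
  rewrite e lnV in hln; last by rewrite posrE divr_gt0.
  have hlnq : ln q <= - (beta / 2) by apply: le_ln1Dx; lra.
  have hm0 : (0 : R) <= m%:R by exact: ler0n.
  have hm1 : (m%:R : R) * (beta / 2) < L.
    have : ln q * m%:R <= - (beta / 2) * m%:R by rewrite ler_wpM2r.
    rewrite -/L in hln; lra.
  have hm2 : (m%:R : R) < 2 * L / beta.
    rewrite ltr_pdivlMr //; lra.
  have hc : ((m%:Z)%:~R : R) < (Num.ceil (2 * L / beta))%:~R.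
    exact: lt_le_trans hm2 (ceil_ge _).
  rewrite ltr_int -lezD1 in hc.
  have : ((m + descent_test beta f (x K) (z K.+1) (fm K))%N%:Z <= (m%:Z + 1)).
    by rewrite -[1]/(1%N%:Z) -PoszD lez_nat leq_add2l leq_b1.
  move=> h; have h2 := le_trans h hc.
  by rewrite -(ler_int R) in h2.
- set n := n_null beta f x z fm K in I3 *.
  have hPK := hPub K hK.
  set DK := f (x K) - fstar in I3 hPK hepsK *.
  have hDK : 0 < DK by lra.
  have hb : ((n + ~~ descent_test beta f (x K) (z K.+1) (fm K))%N%:R : R) <= n%:R + 1.
    by rewrite natrD lerD2l; case: (~~ _).
  apply: le_trans hb _.
  have h1 : (n%:R : R) + 1 <= A / DK ^+ 2 * a + A / DK ^+ 2 by lra.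
  apply: le_trans h1 _.
  have e1 : A / DK ^+ 2 * a + A / DK ^+ 2 = A / DK ^+ 2 / (1 - q ^+ 2).
    by rewrite /a; field; rewrite !gt_eqF // ?exprn_gt0.
  rewrite e1.
  have e2 : 1 / (1 - (1 - beta / 2) ^+ 2) * (8 * M ^+ 2 * D2 / ((1 - beta) ^+ 2 * eps ^+ 2))
     = A / eps ^+ 2 / (1 - q ^+ 2).
    have h4 : 0 < 4 - (2 - beta) ^+ 2 by rewrite expr2; nra.
    by rewrite /A /q; field; rewrite !gt_eqF.
  rewrite e2 ler_pM2r ?invr_gt0 //.
  apply: ler_wpM2l => //.
  rewrite lef_pV2 ?posrE ?exprn_gt0 //.
  by rewrite ler_sqr //; [exact: ltW | exact: ltW | exact: ltW].
Qed.
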